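(* Let $\{\mathfrak{U}_i: i\in I\}$ be a family of Banach algebras each of which is symmetrically pseudo-amenable. Then the direct sum $\bigoplus^p_{i\in I}\mathfrak{U}_i$ is symmetrically pseudo-amenable for every $p\ge1$ and for $p=0$.
   Context: For $1\le p<\infty$, $\bigoplus^p_{i\in I}\mathfrak{U}_i$ is the set of all $x\in\prod_{i\in I}\mathfrak{U}_i$ with $\|x\|_p=(\sum_{i}\|x(i)\|^p)^{1/p}<\infty$; $\bigoplus^0_{i\in I}\mathfrak{U}_i$ is the set of all $x\in\prod_i\mathfrak{U}_i$ with $\lim_i x(i)=0$ (i.e., for every $\varepsilon>0$, $\|x(i)\|<\varepsilon$ for all but finitely many $i$), normed by $\|x\|_\infty=\max_i\|x(i)\|$; these are Banach algebras under coordinatewise operations. For a Banach algebra $\mathfrak{U}$, $\mathfrak{U}\widehat{\otimes}\mathfrak{U}$ is the projective tensor product, with $a(b\otimes c)=ab\otimes c$, $(b\otimes c)a=b\otimes ca$, and $\pi(b\otimes c)=bc$ (extended linearly and continuously). The flip is $(b\otimes c)^{\circ}=c\otimes b$; $\mathbf{t}$ is symmetric if $\mathbf{t}^\circ=\mathbf{t}$. An approximate diagonal is a net $\{\mathbf{t}_\lambda\}$ in $\mathfrak{U}\widehat{\otimes}\mathfrak{U}$ (not necessarily bounded) with $a\mathbf{t}_\lambda-\mathbf{t}_\lambda a\to0$ and $\pi(\mathbf{t}_\lambda)a\to a$ for all $a\in\mathfrak{U}$. $\mathfrak{U}$ is symmetrically pseudo-amenable if it has an approximate diagonal consisting of symmetric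 elements. *)

(* Defs.v *)
From HB Require Import structures.
From mathcomp Require Import all_boot all_order all_algebra.
From Stdlib Require List.
From mathcomp Require Import complex.
From mathcomp Require Import boolp classical_sets reals exp.

Set Implicit Arguments.
Unset Strict Implicit.
Unset Printing Implicit Defensive.

Import Order.TTheory GRing.Theory Num.Theory.
Local Open Scope ring_scope.

(* Operations are explicit so that the same
   notions apply both to each U_i and to the direct sums, whose carrier is a
   subset of the dependent product. *)

Record alg_ops (R : realType) (A : Type) := AlgOps {
  o_add : A -> A -> A;
  o_opp : A -> A;
  o_zero : A;
  o_scale : R[i] -> A -> A;
  o_mul : A -> A -> A;
  o_norm : A -> R
}.

Record banach_algebra (R : realType) := BanachAlgebra {
  ba_car :> Type;
  ba_ops : alg_ops R ba_car;
  ba_addA : forall x y z, o_add ba_ops x (o_add ba_ops y z) = o_add ba_ops (o_add ba_ops x y) z;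
  ba_addC : forall x y, o_add ba_ops x y = o_add ba_ops y x;
  ba_add0 : forall x, o_add ba_ops (o_zero ba_ops) x = x;
  ba_addN : forall x, o_add ba_ops x (o_opp ba_ops x) = o_zero ba_ops;
  ba_scale1 : forall x, o_scale ba_ops 1 x = x;
  ba_scaleA : forall k l x, o_scale ba_ops k (o_scale ba_ops l x) = o_scale ba_ops (k * l) x;
  ba_scaleDr : forall k x y,
    o_scale ba_ops k (o_add ba_ops x y) = o_add ba_ops (o_scale ba_ops k x) (o_scale ba_ops k y);
  ba_scaleDl : forall k l x,
    o_scale ba_ops (k + l) x = o_add ba_ops (o_scale ba_ops k x) (o_scale ba_ops l x);
  ba_mulA : forall x y z, o_mul ba_ops x (o_mul ba_ops y z) = o_mul ba_ops (o_mul ba_ops x y) z;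
  ba_mulDl : forall x y z,
    o_mul ba_ops (o_add ba_ops x y) z = o_add ba_ops (o_mul ba_ops x z) (o_mul ba_ops y z);
  ba_mulDr : forall x y z,
    o_mul ba_ops x (o_add ba_ops y z) = o_add ba_ops (o_mul ba_ops x y) (o_mul ba_ops x z);
  ba_mulZl : forall k x y, o_mul ba_ops (o_scale ba_ops k x) y = o_scale ba_ops k (o_mul ba_ops x y);
  ba_mulZr : forall k x y, o_mul ba_ops x (o_scale ba_ops k y) = o_scale ba_ops k (o_mul ba_ops x y);
  ba_norm_eq0 : forall x, o_norm ba_ops x = 0 -> x = o_zero ba_ops;
  ba_normD : forall x y, o_norm ba_ops (o_add ba_ops x y) <= o_norm ba_ops x + o_norm ba_ops y;
  ba_normZ : forall k x, o_norm ba_ops (o_scale ba_ops k x) = Normc.normc k * o_norm ba_ops x;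
  ba_normM : forall x y, o_norm ba_ops (o_mul ba_ops x y) <= o_norm ba_ops x * o_norm ba_ops y;
  ba_complete : forall u : nat -> ba_car,
    (forall e : R, 0 < e -> exists N, forall m n, (N <= m)%N -> (N <= n)%N ->
        o_norm ba_ops (o_add ba_ops (u m) (o_opp ba_ops (u n))) < e) ->
    exists l, forall e : R, 0 < e -> exists N, forall n, (N <= n)%N ->
        o_norm ba_ops (o_add ba_ops (u n) (o_opp ba_ops l)) < e
}.

Section Tensors.
Variables (R : realType) (A : Type) (o : alg_ops R A) (S : A -> Prop).

(* Elements of the algebraic tensor product S (x) S, as finite formal sums
   sum_j b_j (x) c_j represented by lists of pairs. *)
Definition tensor := seq (A * A).

Definition tin (t : tensor) : Prop := List.Forall (fun x => S x.1 /\ S x.2) t.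

Definition bilin_on (phi : A -> A -> R[i]) : Prop :=
  (forall a a' b, S a -> S a' -> S b -> phi (o_add o a a') b = phi a b + phi a' b) /\
  (forall k a b, S a -> S b -> phi (o_scale o k a) b = k * phi a b) /\
  (forall a b b', S a -> S b -> S b' -> phi a (o_add o b b') = phi a b + phi a b') /\
  (forall k a b, S a -> S b -> phi a (o_scale o k b) = k * phi a b).

(* equality in the algebraic tensor product (universal property) *)
Definition teq (t t' : tensor) : Prop :=
  forall phi, bilin_on phi ->
    \sum_(x <- t) phi x.1 x.2 = \sum_(x <- t') phi x.1 x.2.

(* projective tensor norm of t is < e:
   inf { sum_j |b_j||c_j| : t = sum_j b_j (x) c_j } < e *)
Definition pnorm_lt (t : tensor) (e : R) : Prop :=
  exists t', tin t' /\ teq t t' /\ \sum_(x <- t') o_norm o x.1 * o_norm o x.2 < e.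

Definition tsub (t t' : tensor) : tensor := t ++ map (fun x => (o_opp o x.1, x.2)) t'.
Definition tlmul (a : A) (t : tensor) : tensor := map (fun x => (o_mul o a x.1, x.2)) t.
Definition trmul (t : tensor) (a : A) : tensor := map (fun x => (x.1, o_mul o x.2 a)) t.
Definition tflip (t : tensor) : tensor := map (fun x => (x.2, x.1)) t.
Definition tpi (t : tensor) : A := foldr (fun x acc => o_add o (o_mul o x.1 x.2) acc) (o_zero o) t.

(* Elements of the projective tensor product S (^x) S: the completion of the
   algebraic tensor product, i.e. Cauchy sequences (for the projective norm)
   of algebraic tensors. *)
Definition ptensor_seq (s : nat -> tensor) : Prop :=
  (forall k, tin (s k)) /\
  (forall e : R, 0 < e -> exists N, forall m n, (N <= m)%N -> (N <= n)%N ->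
      pnorm_lt (tsub (s m) (s n)) e).

Definition directed (D : Type) (le : D -> D -> Prop) : Prop :=
  inhabited D /\ (forall x, le x x) /\ (forall x y z, le x y -> le y z -> le x z) /\
  (forall x y, exists z, le x z /\ le y z).

Definition eventually (D : Type) (le : D -> D -> Prop) (P : D -> Prop) : Prop :=
  exists l0, forall l, le l0 l -> P l.

(* A symmetric approximate diagonal: a net (t_l) in S (^x) S, t_l = lim_k T l k,
   with t_l symmetric, a t_l - t_l a -> 0 and pi(t_l) a -> a for all a in S.
   (Norms of limits are limits of norms.) *)
Definition sym_approx_diagonal (D : Type) (le : D -> D -> Prop)
    (T : D -> nat -> tensor) : Prop :=
  directed le /\
  (forall l, ptensor_seq (T l)) /\
  (forall l (e : R), 0 < e -> exists N, forall k, (N <= k)%N ->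
      pnorm_lt (tsub (T l k) (tflip (T l k))) e) /\
  (forall a, S a -> forall e : R, 0 < e -> eventually le (fun l =>
      exists N, forall k, (N <= k)%N ->
        pnorm_lt (tsub (tlmul a (T l k)) (trmul (T l k) a)) e)) /\
  (forall a, S a -> forall e : R, 0 < e -> eventually le (fun l =>
      exists N, forall k, (N <= k)%N ->
        o_norm o (o_add o (o_mul o (tpi (T l k)) a) (o_opp o a)) < e)).

Definition sym_pseudo_amenable : Prop :=
  exists (D : Type) (le : D -> D -> Prop) (T : D -> nat -> tensor),
    sym_approx_diagonal le T.

End Tensors.

Section DirectSums.
Variables (R : realType) (I : Type) (U : I -> banach_algebra R).

Definition dprod := forall i, U i.

(* sum over all of I of a nonnegative family, as sup of finite partial sums *)
Definition fin_psums (f : I -> R) : set R :=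
  [set r | exists l : seq I, List.NoDup l /\ r = \sum_(i <- l) f i].

Definition ds_pow (p : R) (x : dprod) : I -> R :=
  fun i => powR (o_norm (ba_ops (U i)) (x i)) p.

Definition lp_set (p : R) : dprod -> Prop :=
  fun x => has_ubound (fin_psums (ds_pow p x)).

Definition lp_norm (p : R) (x : dprod) : R :=
  powR (sup (fin_psums (ds_pow p x))) (p^-1).

Definition c0_set : dprod -> Prop :=
  fun x => forall e : R, 0 < e -> exists l : seq I,
      forall i, e <= o_norm (ba_ops (U i)) (x i) -> List.In i l.

Definition c0_norm (x : dprod) : R :=
  sup [set r | exists i, r = o_norm (ba_ops (U i)) (x i)].

Definition ds_ops (nrm : dprod -> R) : alg_ops R dprod :=
  @AlgOps R dprod
    (fun x y i => o_add (ba_ops (U i)) (x i) (y i))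
    (fun x i => o_opp (ba_ops (U i)) (x i))
    (fun i => o_zero (ba_ops (U i)))
    (fun k x i => o_scale (ba_ops (U i)) k (x i))
    (fun x y i => o_mul (ba_ops (U i)) (x i) (y i))
    nrm.

End DirectSums.

Arguments lp_set {R I} U p x.
Arguments lp_norm {R I} U p x.
Arguments c0_set {R I} U x.
Arguments c0_norm {R I} U x.
Arguments ds_ops {R I} U nrm.

(* Main.v *)
Require Import Defs.
From mathcomp Require Import all_boot all_order all_algebra.
From mathcomp Require Import complex.
From mathcomp Require Import boolp classical_sets reals exp.
From mathcomp Require Import lra.
Import Order.TTheory GRing.Theory Num.Theory.
Local Open Scope ring_scope.

Section BA.
Variables (R : realType) (B : banach_algebra R).
Local Notation ops := (ba_ops B).
Local Notation add := (o_add ops).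
Local Notation opp := (o_opp ops).
Local Notation zero := (o_zero ops).
Local Notation scale := (o_scale ops).
Local Notation mul := (o_mul ops).
Local Notation norm := (o_norm ops).

Lemma ba_addr0 x : add x zero = x.
Proof. by rewrite ba_addC ba_add0. Qed.

Lemma ba_addKl x y z : add x y = add x z -> y = z.
Proof.
move=> h.
have e : forall w, add (opp x) (add x w) = w.
  by move=> w; rewrite ba_addA (ba_addC (opp x)) ba_addN ba_add0.
by rewrite -(e y) h e.
Qed.

Lemma ba_dbl0 x : add x x = x -> x = zero.
Proof. by move=> h; apply: (@ba_addKl x); rewrite h ba_addr0. Qed.

Lemma ba_scale0 x : scale 0 x = zero.
Proof. by apply: ba_dbl0; rewrite -ba_scaleDl addr0. Qed.

Lemma ba_scaler0 k : scale k zero = zero.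
Proof. by apply: ba_dbl0; rewrite -ba_scaleDr ba_add0. Qed.

Lemma ba_mul0r x : mul zero x = zero.
Proof. by apply: ba_dbl0; rewrite -ba_mulDl ba_add0. Qed.

Lemma ba_mulr0 x : mul x zero = zero.
Proof. by apply: ba_dbl0; rewrite -ba_mulDr ba_add0. Qed.

Lemma ba_oppE x : opp x = scale (-1) x.
Proof.
apply: (@ba_addKl x); rewrite ba_addN.
rewrite -{1}(ba_scale1 x) -ba_scaleDl subrr ba_scale0 //.
Qed.

Lemma ba_opp0 : opp zero = zero.
Proof. by rewrite ba_oppE ba_scaler0. Qed.

Lemma ba_norm0 : norm zero = 0.
Proof. by rewrite -(ba_scale0 zero) ba_normZ Normc.normc0 mul0r. Qed.

Lemma ba_normN x : norm (opp x) = norm x.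
Proof. by rewrite ba_oppE ba_normZ normcN Normc.normc1 mul1r. Qed.

Lemma ba_norm_ge0 x : 0 <= norm x.
Proof.
have := ba_normD x (opp x); rewrite ba_addN ba_norm0 ba_normN.
by rewrite -mulr2n pmulrn_lge0.
Qed.
End BA.
Section Gen.
Variables (R : realType) (A : Type) (o : alg_ops R A) (S : A -> Prop).

Lemma teq_refl t : teq o S t t.
Proof. by []. Qed.

Lemma teq_trans t1 t2 t3 : teq o S t1 t2 -> teq o S t2 t3 -> teq o S t1 t3.
Proof. by move=> h1 h2 phi bp; rewrite h1 // h2. Qed.

Lemma pnorm_teq t t' e : teq o S t t' -> pnorm_lt o S t' e -> pnorm_lt o S t e.
Proof.
move=> h [t'' [h1 [h2 h3]]]; exists t''; split=> //; split=> //.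
exact: teq_trans h2.
Qed.

Lemma pnorm_le t e e' : pnorm_lt o S t e -> e <= e' -> pnorm_lt o S t e'.
Proof.
move=> [t'' [h1 [h2 h3]]] le; exists t''; split=> //; split=> //.
exact: lt_le_trans le.
Qed.

Lemma pnorm_nil e : 0 < e -> pnorm_lt o S [::] e.
Proof.
move=> e0; exists [::]; split; first by constructor.
by split=> //; rewrite big_nil.
Qed.

Lemma pnorm_cat t t' e e' : pnorm_lt o S t e -> pnorm_lt o S t' e' ->
  pnorm_lt o S (t ++ t') (e + e').
Proof.
move=> [u [h1 [h2 h3]]] [u' [h1' [h2' h3']]]; exists (u ++ u'); split.
  by apply/List.Forall_app; split.
split; first by move=> phi bp; rewrite !big_cat /= h2 // h2'.
by rewrite big_cat /=; apply: ltrD.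
Qed.

End Gen.
Section Iota.
Variables (R : realType) (I : Type) (U : I -> banach_algebra R).
Local Notation D := (dprod U).
Local Notation ops i := (ba_ops (U i)).

Definition iota (i : I) (b : U i) : D := fun j =>
  match pselect (i = j) with
  | left H => eq_rect i (fun k => ba_car (U k)) b j H
  | right _ => o_zero (ops j)
  end.
Arguments iota {i} b _.

Lemma iota_id i (b : U i) : iota b i = b.
Proof.
rewrite /iota; case: pselect => [H|H]; last by case: H.
by rewrite (Prop_irrelevance H erefl).
Qed.

Lemma iota_ne i j (b : U i) : i <> j -> iota b j = o_zero (ops j).
Proof. by rewrite /iota; case: pselect. Qed.

Lemma iota_map1 (f : forall k, U k -> U k) i (b : U i) :
  (forall k, f k (o_zero (ops k)) = o_zero (ops k)) ->
  iota (f i b) = fun j => f j (iota b j).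
Proof.
move=> f0; apply: functional_extensionality_dep => j.
rewrite /iota; case: pselect => [H|H]; last by rewrite f0.
by destruct H.
Qed.

Lemma iota_map2 (f : forall k, U k -> U k -> U k) i (b c : U i) :
  (forall k, f k (o_zero (ops k)) (o_zero (ops k)) = o_zero (ops k)) ->
  iota (f i b c) = fun j => f j (iota b j) (iota c j).
Proof.
move=> f0; apply: functional_extensionality_dep => j.
rewrite /iota; case: pselect => [H|H]; last by rewrite f0.
by destruct H.
Qed.

Definition iotaT i (t : tensor (U i)) : tensor D :=
  map (fun x => (iota x.1, iota x.2)) t.
Arguments iotaT {i} t.

Definition bigT (F : seq I) (X : forall i, tensor (U i)) : tensor D :=
  flatten (map (fun i => iotaT (X i)) F).

End Iota.
Arguments iota {R I U i} b _.
Arguments iotaT {R I U i} t.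
Arguments bigT {R I U} F X.

Lemma half_ineq (R : realType) (c : R) (n : nat) : 0 < c ->
  c / 2 + n%:R * (c / 2 / (n%:R + 1)) <= c.
Proof.
move=> c0.
have n1 : 0 < n%:R + 1 :> R by rewrite ltr_wpDl.
have h : n%:R * (c / 2 / (n%:R + 1)) <= c / 2.
  rewrite mulrA ler_pdivrMr // mulrC ler_wpM2l //.
    by rewrite divr_ge0 // ltW.
  by rewrite lerDl.
by apply: le_trans (lerD (lexx _) h) _; rewrite -splitr.
Qed.

Section Nets.
Lemma ev_and (T : Type) (le : T -> T -> Prop) (P Q : T -> Prop) : directed le ->
  Defs.eventually le P -> Defs.eventually le Q -> Defs.eventually le (fun l => P l /\ Q l).
Proof.
move=> [_ [_ [tr ub]]] [l1 h1] [l2 h2]; have [z [z1 z2]] := ub l1 l2.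
by exists z => l hl; split; [apply: h1; apply: tr hl | apply: h2; apply: tr hl].
Qed.

Lemma ev_list (T X : Type) (le : T -> T -> Prop) (P : X -> T -> Prop) (A : seq X) : directed le ->
  (forall a, List.In a A -> Defs.eventually le (P a)) ->
  Defs.eventually le (fun l => forall a, List.In a A -> P a l).
Proof.
move=> dir; elim: A => [|a A IH] h.
  by case: dir => [[l0] _]; exists l0 => l _ a [].
have := @ev_and _ le _ _ dir (h a (or_introl erefl)) (IH (fun b hb => h b (or_intror hb))).
by case=> l0 hl; exists l0 => l /hl [ha hA] b /= [<-|hb] //; apply: hA.
Qed.

Lemma fin_max (T : Type) (F : seq T) (Q : T -> nat -> Prop) :
  (forall i N N', (N <= N')%N -> Q i N -> Q i N') ->
  (forall i, List.In i F -> exists N, Q i N) -> exists N, forall i, List.In i F -> Q i N.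
Proof.
move=> mono; elim: F => [|i F IH] h; first by exists 0%N.
have [N1 h1] := h i (or_introl erefl).
have [N2 h2] := IH (fun j hj => h j (or_intror hj)).
exists (maxn N1 N2) => j /= [<-|hj].
  by apply: mono h1; apply: leq_maxl.
by apply: mono (h2 j hj); apply: leq_maxr.
Qed.
End Nets.

Section SeqI.
Variables (R : realType) (B : banach_algebra R).
Local Notation o := (ba_ops B).

Lemma seq_i (A : seq B) (eta : R) : 0 < eta ->
  sym_pseudo_amenable o (fun _ => True) ->
  exists s : nat -> tensor B, ptensor_seq o (fun _ => True) s /\
   (forall e, 0 < e -> exists N, forall k, (N <= k)%N ->
      pnorm_lt o (fun _ => True) (tsub o (s k) (tflip (s k))) e) /\
   (forall a, List.In a A -> exists N, forall k, (N <= k)%N ->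
      pnorm_lt o (fun _ => True) (tsub o (tlmul o a (s k)) (trmul o (s k) a)) eta /\
      o_norm o (o_add o (o_mul o (tpi o (s k)) a) (o_opp o a)) < eta).
Proof.
move=> eta0 [Dn [le [T [dir [pt [sym [c4 c5]]]]]]].
have := @ev_list _ _ le (fun a l => (exists N, forall k, (N <= k)%N ->
        pnorm_lt o (fun _ => True) (tsub o (tlmul o a (T l k)) (trmul o (T l k) a)) eta) /\
     (exists N, forall k, (N <= k)%N ->
        o_norm o (o_add o (o_mul o (tpi o (T l k)) a) (o_opp o a)) < eta)) A dir.
case.
  by move=> a _; apply: ev_and => //; [apply: c4 | apply: c5].
move=> l0 hl0; have [_ [refl _]] := dir.
exists (T l0); split; first exact: pt.
split; first exact: sym.
move=> a /(hl0 l0 (refl l0)) [[N1 h1] [N2 h2]].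
exists (maxn N1 N2) => k hk; split.
  by apply: h1; apply: leq_trans hk; apply: leq_maxl.
by apply: h2; apply: leq_trans hk; apply: leq_maxr.
Qed.
End SeqI.


Section DS.
Variables (R : realType) (I : Type) (U : I -> banach_algebra R).
Local Notation D := (dprod U).
Local Notation ops i := (ba_ops (U i)).
Variables (N : D -> R) (S : D -> Prop).
Local Notation O := (ds_ops U N).
Hypothesis iota_in : forall i (b : U i), S (iota b).
Hypothesis iota_norm : forall i (b : U i), N (iota b) <= o_norm (ops i) b.
Hypothesis iota_norm_ge0 : forall i (b : U i), 0 <= N (iota b).

Lemma iota_add i (b c : U i) : iota (o_add (ops i) b c) = o_add O (iota b) (iota c).
Proof. by rewrite (@iota_map2 _ _ U (fun k => o_add (ops k))) // => k; rewrite ba_add0. Qed.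

Lemma iota_scale i k (b : U i) : iota (o_scale (ops i) k b) = o_scale O k (iota b).
Proof. by rewrite (@iota_map1 _ _ U (fun j => o_scale (ops j) k)) // => j; rewrite ba_scaler0. Qed.

Lemma iota_opp i (b : U i) : iota (o_opp (ops i) b) = o_opp O (iota b).
Proof. by rewrite (@iota_map1 _ _ U (fun j => o_opp (ops j))) // => j; rewrite ba_opp0. Qed.

Lemma iota_lmul (a : D) i (b : U i) : iota (o_mul (ops i) (a i) b) = o_mul O a (iota b).
Proof. by rewrite (@iota_map1 _ _ U (fun j => o_mul (ops j) (a j))) // => j; rewrite ba_mulr0. Qed.

Lemma iota_rmul (a : D) i (b : U i) : iota (o_mul (ops i) b (a i)) = o_mul O (iota b) a.
Proof. by rewrite (@iota_map1 _ _ U (fun j x => o_mul (ops j) x (a j))) // => j; rewrite ba_mul0r. Qed.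

Lemma bilin_iota phi i : bilin_on O S phi ->
  bilin_on (ops i) (fun _ => True) (fun b c => phi (iota b) (iota c)).
Proof.
move=> [h1 [h2 [h3 h4]]]; split; [|split; [|split]].
- by move=> a a' b _ _ _; rewrite iota_add h1.
- by move=> k a b _ _; rewrite iota_scale h2.
- by move=> a b b' _ _ _; rewrite iota_add h3.
- by move=> k a b _ _; rewrite iota_scale h4.
Qed.

Lemma sum_bigT (phi : D -> D -> R[i]) F X :
  \sum_(x <- bigT F X) phi x.1 x.2 =
  \sum_(i <- F) \sum_(x <- X i) phi (iota x.1) (iota x.2).
Proof.
elim: F => [|i F IH]; first by rewrite !big_nil.
by rewrite /bigT /= big_cat big_cons -IH /iotaT big_map.
Qed.

Lemma teq_bigT F X Y : (forall i, List.In i F -> teq (ops i) (fun _ => True) (X i) (Y i)) ->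
  teq O S (bigT F X) (bigT F Y).
Proof.
move=> h phi bp; rewrite !sum_bigT.
elim: F h => [|i F IH] h; first by rewrite !big_nil.
rewrite !big_cons IH; last by move=> j hj; apply: h; right.
by have /= -> := h i (or_introl erefl) _ (@bilin_iota phi i bp).
Qed.

Lemma tin_iotaT i (t : tensor (U i)) : tin S (iotaT t).
Proof.
elim: t => [|x t IH]; first by constructor.
by constructor => //; split; apply: iota_in.
Qed.

Lemma tin_bigT (F : seq I) (X : forall i, tensor (U i)) : tin S (bigT F X).
Proof.
elim: F => [|i F IH]; first by constructor.
by rewrite /bigT /=; apply/List.Forall_app; split => //; apply: tin_iotaT.
Qed.

Lemma pnorm_iotaT i (t : tensor (U i)) e :
  pnorm_lt (ops i) (fun _ => True) t e -> pnorm_lt O S (iotaT t) e.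
Proof.
move=> [t' [h1 [h2 h3]]]; exists (iotaT t'); split; first exact: tin_iotaT.
split.
  move=> phi bp; rewrite /iotaT !big_map.
  exact: (h2 (fun b c => phi (iota b) (iota c)) (@bilin_iota phi i bp)).
apply: le_lt_trans h3; rewrite /iotaT big_map; apply: ler_sum => x _.
by apply: ler_pM; rewrite ?iota_norm_ge0 ?iota_norm.
Qed.

Lemma pnorm_bigT F X e0 eps : 0 < e0 ->
  (forall i, List.In i F -> pnorm_lt (ops i) (fun _ => True) (X i) eps) ->
  pnorm_lt O S (bigT F X) (e0 + (size F)%:R * eps).
Proof.
move=> e0p; elim: F => [|i F IH] h.
  by rewrite mul0r addr0; apply: pnorm_nil.
rewrite /bigT /=; apply: (@pnorm_le _ _ _ _ _ (eps + (e0 + (size F)%:R * eps))).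
  apply: pnorm_cat; first by apply: pnorm_iotaT; apply: h; left.
  by apply: IH => j hj; apply: h; right.
by rewrite -nat1r mulrDl mul1r addrCA.
Qed.

Lemma bigT_cons i (F : seq I) (X : forall i, tensor (U i)) :
  bigT (i :: F) X = iotaT (X i) ++ bigT F X.
Proof. by []. Qed.

Lemma tflip_bigT (F : seq I) (X : forall i, tensor (U i)) : tflip (bigT F X) = bigT F (fun i => tflip (X i)).
Proof.
elim: F => [|i F IH] //; rewrite !bigT_cons -IH /tflip map_cat.
by rewrite /iotaT -!map_comp.
Qed.

Lemma tlmul_bigT (a : D) (F : seq I) (X : forall i, tensor (U i)) :
  tlmul O a (bigT F X) = bigT F (fun i => tlmul (ops i) (a i) (X i)).
Proof.
elim: F => [|i F IH] //; rewrite !bigT_cons -IH /tlmul map_cat.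
rewrite /iotaT -!map_comp; congr (_ ++ _); apply: eq_map => x /=.
by rewrite iota_lmul.
Qed.

Lemma trmul_bigT (a : D) (F : seq I) (X : forall i, tensor (U i)) :
  trmul O (bigT F X) a = bigT F (fun i => trmul (ops i) (X i) (a i)).
Proof.
elim: F => [|i F IH] //; rewrite !bigT_cons -IH /trmul map_cat.
rewrite /iotaT -!map_comp; congr (_ ++ _); apply: eq_map => x /=.
by rewrite iota_rmul.
Qed.

Lemma tsub_bigT (F : seq I) (X Y : forall i, tensor (U i)) :
  teq O S (tsub O (bigT F X) (bigT F Y)) (bigT F (fun i => tsub (ops i) (X i) (Y i))).
Proof.
move=> phi _; rewrite /tsub big_cat /=.
have -> : map (fun x => (o_opp O x.1, x.2)) (bigT F Y) =
          bigT F (fun i => map (fun x => (o_opp (ops i) x.1, x.2)) (Y i)).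
  elim: F => [|i F IH] //; rewrite !bigT_cons map_cat IH /iotaT -!map_comp.
  by congr (_ ++ _); apply: eq_map => x /=; rewrite iota_opp.
rewrite !sum_bigT -big_split /=; apply: eq_bigr => i _.
by rewrite big_cat.
Qed.

Lemma tpi_coord (t : tensor D) j :
  tpi O t j = tpi (ops j) (map (fun x => (x.1 j, x.2 j)) t).
Proof. by elim: t => [|x t IH] //=; rewrite IH. Qed.

Lemma tpi_cat j (t t' : tensor (U j)) :
  tpi (ops j) (t ++ t') = o_add (ops j) (tpi (ops j) t) (tpi (ops j) t').
Proof.
elim: t => [|x t IH] /=; first by rewrite ba_add0.
by rewrite IH ba_addA.
Qed.

Lemma coord_iotaT_ne i j (t : tensor (U i)) : i <> j ->
  tpi (ops j) (map (fun x => (x.1 j, x.2 j)) (iotaT t)) = o_zero (ops j).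
Proof.
move=> ne; elim: t => [|x t IH] //=.
by rewrite IH !iota_ne // ba_mul0r ba_add0.
Qed.

Lemma coord_iotaT_eq j (t : tensor (U j)) :
  map (fun x => (x.1 j, x.2 j)) (iotaT t) = t.
Proof.
elim: t => [|x t IH] //=; rewrite IH !iota_id.
by case: x.
Qed.

Lemma tpi_big_out (F : seq I) (X : forall i, tensor (U i)) j : ~ List.In j F -> tpi O (bigT F X) j = o_zero (ops j).
Proof.
rewrite tpi_coord; elim: F => [|i F IH] // h.
rewrite bigT_cons map_cat tpi_cat coord_iotaT_ne; last by move=> e; apply: h; left.
by rewrite ba_add0 IH // => h'; apply: h; right.
Qed.

Lemma tpi_big_in (F : seq I) (X : forall i, tensor (U i)) j : List.NoDup F -> List.In j F ->
  tpi O (bigT F X) j = tpi (ops j) (X j).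
Proof.
elim: F => [|i F IH] //= nd [e|h].
  clear IH; case: j / e; rewrite bigT_cons tpi_coord map_cat tpi_cat coord_iotaT_eq.
  move: nd => /List.NoDup_cons_iff [ni _].
  by rewrite -tpi_coord (@tpi_big_out F X i ni) ba_addr0.
move: nd => /List.NoDup_cons_iff [ni nd].
rewrite bigT_cons tpi_coord map_cat tpi_cat coord_iotaT_ne; last first.
  by move=> e; apply: ni; rewrite e.
by rewrite ba_add0 -tpi_coord IH.
Qed.


Hypothesis Hi : forall i, sym_pseudo_amenable (ops i) (fun _ => True).
Hypothesis tail : forall (A : seq D) (e : R), 0 < e -> exists (F : seq I) (d : R),
  List.NoDup F /\ 0 < d /\
  forall a, List.In a A -> S a -> forall x : D,
    (forall j, List.In j F -> o_norm (ops j) (x j) < d) ->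
    (forall j, ~ List.In j F -> x j = o_opp (ops j) (a j)) -> N x < e.

Lemma approx (A : seq D) (e : R) : 0 < e ->
  exists s : nat -> tensor D, ptensor_seq O S s /\
   (forall e', 0 < e' -> exists M, forall k, (M <= k)%N ->
      pnorm_lt O S (tsub O (s k) (tflip (s k))) e') /\
   (forall a, List.In a A -> S a -> exists M, forall k, (M <= k)%N ->
      pnorm_lt O S (tsub O (tlmul O a (s k)) (trmul O (s k) a)) e /\
      N (o_add O (o_mul O (tpi O (s k)) a) (o_opp O a)) < e).
Proof.
move=> e0.
have [F [d [nd [d0 ht]]]] := tail A e e0.
pose n := size F.
pose eps := e / 2 / (n%:R + 1).
have n1 : 0 < n%:R + 1 :> R by rewrite ltr_wpDl.
have eps0 : 0 < eps by rewrite /eps !divr_gt0.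
pose eta := Num.min d eps.
have eta0 : 0 < eta by rewrite /eta lt_min d0 eps0.
have hs : forall i, {s : nat -> tensor (U i) | ptensor_seq (ops i) (fun _ => True) s /\
   (forall e, 0 < e -> exists N, forall k, (N <= k)%N ->
      pnorm_lt (ops i) (fun _ => True) (tsub (ops i) (s k) (tflip (s k))) e) /\
   (forall a, List.In a (map (fun a : D => a i) A) -> exists N, forall k, (N <= k)%N ->
      pnorm_lt (ops i) (fun _ => True)
        (tsub (ops i) (tlmul (ops i) a (s k)) (trmul (ops i) (s k) a)) eta /\
      o_norm (ops i) (o_add (ops i) (o_mul (ops i) (tpi (ops i) (s k)) a) (o_opp (ops i) a)) < eta)}.
  by move=> i; apply: cid; apply: seq_i.
pose s i := proj1_sig (hs i).
have sP : forall i, _ := fun i => proj2_sig (hs i).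
exists (fun k => bigT F (fun i => s i k)); split; [split|split].
- by move=> k; apply: tin_bigT.
- move=> e' e'0.
  have eps'0 : 0 < e' / 2 / (n%:R + 1) by rewrite !divr_gt0.
  have [|| M hM] := @fin_max _ F (fun i M => forall m k, (M <= m)%N -> (M <= k)%N ->
      pnorm_lt (ops i) (fun _ => True) (tsub (ops i) (s i m) (s i k)) (e' / 2 / (n%:R + 1))).
  + move=> i M M' le h m k hm hk; apply: h; exact: leq_trans hm || exact: leq_trans hk.
  + move=> i _; have [[_ c] _] := sP i; exact: c.
  + exists M => m k hm hk; apply: pnorm_teq; first exact: tsub_bigT.
    apply: pnorm_le; first apply: (@pnorm_bigT _ _ (e' / 2)).
    * by rewrite divr_gt0.
    * by move=> i hi; apply: hM.
    exact: half_ineq.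
- move=> e' e'0.
  have eps'0 : 0 < e' / 2 / (n%:R + 1) by rewrite !divr_gt0.
  have [|| M hM] := @fin_max _ F (fun i M => forall k, (M <= k)%N ->
      pnorm_lt (ops i) (fun _ => True) (tsub (ops i) (s i k) (tflip (s i k))) (e' / 2 / (n%:R + 1))).
  + move=> i M M' le h k hk; apply: h; exact: leq_trans hk.
  + move=> i _; have [_ [c _]] := sP i; exact: c.
  + exists M => k hk; apply: pnorm_teq; first by rewrite tflip_bigT; exact: tsub_bigT.
    apply: pnorm_le; first apply: (@pnorm_bigT _ _ (e' / 2)).
    * by rewrite divr_gt0.
    * by move=> i hi; apply: hM.
    exact: half_ineq.
move=> a hA hS.
have [|| M hM] := @fin_max _ F (fun i M => forall k, (M <= k)%N ->
      pnorm_lt (ops i) (fun _ => True)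
        (tsub (ops i) (tlmul (ops i) (a i) (s i k)) (trmul (ops i) (s i k) (a i))) eta /\
      o_norm (ops i) (o_add (ops i) (o_mul (ops i) (tpi (ops i) (s i k)) (a i))
         (o_opp (ops i) (a i))) < eta).
  + move=> i M M' le h k hk; apply: h; exact: leq_trans hk.
  + move=> i _; have [_ [_ c]] := sP i; apply: c.
    exact: (List.in_map (fun a : D => a i)).
+ exists M => k hk; split.
    apply: pnorm_teq; first by rewrite tlmul_bigT trmul_bigT; exact: tsub_bigT.
    apply: pnorm_le; first apply: (@pnorm_bigT _ _ (e / 2) eps).
    * by rewrite divr_gt0.
    * move=> i hi; apply: (@pnorm_le _ _ _ _ _ eta); first by case: (hM i hi k hk) => h _; exact: h.
      by rewrite /eta ge_min lexx orbT.
    exact: half_ineq.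
  apply: (ht a hA hS).
    move=> j hj /=; rewrite tpi_big_in //.
    have [_ h2] := hM j hj k hk; apply: lt_le_trans h2 _.
    by rewrite /eta ge_min lexx.
  move=> j hj /=; rewrite tpi_big_out // ba_mul0r ba_add0 //.
Qed.

Definition rk (n : nat) : R := (n.+1%:R)^-1.
Lemma rk_gt0 n : 0 < rk n.
Proof. by rewrite /rk invr_gt0 ltr0Sn. Qed.
Lemma rk_le n m : (n <= m)%N -> rk m <= rk n.
Proof.
move=> h; rewrite /rk lef_pV2 ?posrE ?ltr0Sn //.
by rewrite ler_nat ltnS.
Qed.
Lemma rk_small (e : R) : 0 < e -> exists n, rk n < e.
Proof.
move=> e0; exists (Num.Def.archi_bound e^-1).
rewrite /rk invf_plt ?posrE ?ltr0Sn //.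
apply: lt_trans (archi_boundP _) _; first by rewrite invr_ge0 ltW.
by rewrite ltr_nat.
Qed.

Definition selT (x : seq D * nat) : nat -> tensor D :=
  proj1_sig (cid (approx x.1 (rk x.2) (rk_gt0 x.2))).

Lemma ds_spa : sym_pseudo_amenable O S.
Proof.
pose le := fun x y : seq D * nat => (forall a, List.In a x.1 -> List.In a y.1) /\ (x.2 <= y.2)%N.
exists (seq D * nat)%type, le, selT.
have sP : forall x, _ := fun x => proj2_sig (cid (approx x.1 (rk x.2) (rk_gt0 x.2))).
split; [|split; [|split; [|split]]].
- split; first by constructor; exact: ([::], 0%N).
  split; first by move=> x; split.
  split.
    move=> x y z [h1 h2] [h3 h4]; split; first by move=> a /h1 /h3.
    exact: leq_trans h4.
  move=> x y; exists (x.1 ++ y.1, maxn x.2 y.2); split; split => /=.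
  + by move=> a h; apply: List.in_or_app; left.
  + exact: leq_maxl.
  + by move=> a h; apply: List.in_or_app; right.
  + exact: leq_maxr.
- by move=> x; have [] := sP x.
- by move=> x e e0; have [_ [h _]] := sP x; apply: h.
- move=> a Sa e e0; have [n0 hn0] := @rk_small e e0.
  exists ([:: a], n0) => l [hl1 hl2].
  have [_ [_ h]] := sP l.
  have [M hM] := h a (hl1 a (or_introl erefl)) Sa.
  exists M => k hk; apply: pnorm_le; first by case: (hM k hk) => h1 _; exact: h1.
  by apply: (le_trans (rk_le _ _ hl2)); apply: ltW.
- move=> a Sa e e0; have [n0 hn0] := @rk_small e e0.
  exists ([:: a], n0) => l [hl1 hl2].
  have [_ [_ h]] := sP l.
  have [M hM] := h a (hl1 a (or_introl erefl)) Sa.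
  exists M => k hk; case: (hM k hk) => _ h2.
  by apply: (lt_le_trans h2); apply: (le_trans (rk_le _ _ hl2)); apply: ltW.
Qed.

End DS.
Section Lists.
Variable T : Type.

Lemma cover (X : Type) (A : seq X) (P : X -> seq T -> Prop) :
  (forall a F F', (forall j, List.In j F -> List.In j F') -> P a F -> P a F') ->
  (forall a, List.In a A -> exists F, P a F) ->
  exists F, List.NoDup F /\ forall a, List.In a A -> P a F.
Proof.
move=> mono; elim: A => [|a A IH] h.
  by exists [::]; split; [constructor | move=> a []].
have [Fa ha] := h a (or_introl erefl).
have [FA [_ hA]] := IH (fun b hb => h b (or_intror hb)).
pose dec := fun x y : T => pselect (x = y).
exists (List.nodup dec (Fa ++ FA)); split; first exact: List.NoDup_nodup.
move=> b /= [<-|hb].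
  apply: mono ha => j hj; apply/List.nodup_In; apply: List.in_or_app; by left.
apply: mono (hA b hb) => j hj; apply/List.nodup_In; apply: List.in_or_app; by right.
Qed.

Lemma In_filter (P : pred T) (G : seq T) j :
  List.In j [seq x <- G | P x] <-> P j /\ List.In j G.
Proof.
elim: G => [|x G IH] /=; first by split=> // [[]].
case Px: (P x) => /=.
  split; first by case=> [<-|/IH [h1 h2]]; split => //; [left|right].
  by case=> pj [<-|hj]; [left | right; apply/IH].
split; first by move=> /IH [h1 h2]; split => //; right.
by case=> pj [e|hj]; [rewrite -e Px in pj | apply/IH].
Qed.

Lemma NoDup_filter' (P : pred T) (G : seq T) :
  List.NoDup G -> List.NoDup [seq x <- G | P x].
Proof.
elim: G => [|x G IH] /= nd; first by constructor.
move/List.NoDup_cons_iff: nd => [nx nd].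
case: (P x) => //; last exact: IH.
by constructor; [move=> /In_filter [_ h] | apply: IH].
Qed.

Lemma size_filter_In (P : pred T) (G F : seq T) :
  List.NoDup G -> (forall j, P j -> List.In j F) -> (size [seq x <- G | P x] <= size F)%N.
Proof.
move=> nd h; apply/ssrnat.leP.
apply: List.NoDup_incl_length; first exact: NoDup_filter'.
by move=> j /In_filter [pj _]; apply: h.
Qed.
End Lists.

Section Sums.
Variables (R : realType) (T : Type).

Lemma sum_zero (f : T -> R) (l : seq T) : (forall j, List.In j l -> f j = 0) ->
  \sum_(j <- l) f j = 0.
Proof.
elim: l => [|x l IH] h; first by rewrite big_nil.
by rewrite big_cons h ?IH ?add0r // => [j hj|]; [apply: h; right | left].
Qed.

Lemma sum_single_le (f : T -> R) i (l : seq T) : (forall j, j <> i -> f j = 0) ->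
  0 <= f i -> List.NoDup l -> \sum_(j <- l) f j <= f i.
Proof.
move=> h0 fi; elim: l => [|x l IH] nd; first by rewrite big_nil.
move/List.NoDup_cons_iff: nd => [nx nd]; rewrite big_cons.
case: (pselect (x = i)) => [e|ne].
  rewrite -e sum_zero ?addr0 // => j hj; apply: h0 => eji; apply: nx.
  by rewrite e -eji.
by rewrite h0 // add0r IH.
Qed.

Lemma eq_sum_In (f g : T -> R) (l : seq T) : (forall j, List.In j l -> f j = g j) ->
  \sum_(j <- l) f j = \sum_(j <- l) g j.
Proof.
elim: l => [|x l IH] h; first by rewrite !big_nil.
by rewrite !big_cons h ?IH // => [j hj|]; [apply: h; right | left].
Qed.

Lemma sum_le_const (f : T -> R) (c : R) (l : seq T) : (forall j, List.In j l -> f j <= c) ->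
  \sum_(j <- l) f j <= (size l)%:R * c.
Proof.
elim: l => [|x l IH] h; first by rewrite big_nil mul0r.
rewrite big_cons /= -nat1r mulrDl mul1r; apply: lerD; first by apply: h; left.
by apply: IH => j hj; apply: h; right.
Qed.
End Sums.

Section Spec.
Variables (R : realType) (I : Type) (U : I -> banach_algebra R).
Local Notation D := (dprod U).
Local Notation ops i := (ba_ops (U i)).

Lemma c0_iota_in {i} (b : U i) : c0_set U (iota b).
Proof.
move=> e e0; exists [:: i] => j hj; case: (pselect (i = j)) => [->|ne]; first by left.
move: hj; rewrite iota_ne // ba_norm0 => hj.
by move: (lt_le_trans e0 hj); rewrite ltxx.
Qed.

Lemma c0_iota_hs {i} (b : U i) :
  has_sup [set r | exists j, r = o_norm (ops j) (iota b j)].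
Proof.
split; first by exists (o_norm (ops i) (iota b i)), i.
exists (o_norm (ops i) b) => r [j ->].
case: (pselect (i = j)) => [e|ne]; last by rewrite iota_ne // ba_norm0 ba_norm_ge0.
by case: j / e; rewrite iota_id.
Qed.

Lemma c0_iota_norm {i} (b : U i) : c0_norm U (iota b) <= o_norm (ops i) b.
Proof.
have [ne [B hB]] := c0_iota_hs b.
apply: ge_sup => // r [j ->].
case: (pselect (i = j)) => [e|ne']; last by rewrite iota_ne // ba_norm0 ba_norm_ge0.
by case: j / e; rewrite iota_id.
Qed.

Lemma c0_iota_ge0 {i} (b : U i) : 0 <= c0_norm U (iota b).
Proof.
apply: le_trans (ba_norm_ge0 _ _ (iota b i)) _.
by apply: sup_upper_bound; [exact: c0_iota_hs | exists i].
Qed.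

Lemma c0_tail (A : seq D) (e : R) : 0 < e -> exists (F : seq I) (d : R),
  List.NoDup F /\ 0 < d /\
  forall a, List.In a A -> c0_set U a -> forall x : D,
    (forall j, List.In j F -> o_norm (ops j) (x j) < d) ->
    (forall j, ~ List.In j F -> x j = o_opp (ops j) (a j)) -> c0_norm U x < e.
Proof.
move=> e0; have e20 : 0 < e / 2 by rewrite divr_gt0.
have [|| F [nd hF]] := @cover I D A (fun a F => c0_set U a ->
   forall j, e / 2 <= o_norm (ops j) (a j) -> List.In j F).
- by move=> a F F' sub h ca j hj; apply: sub; apply: h.
- move=> a _; case: (pselect (c0_set U a)) => [ca|nca]; last by exists [::].
  by have [l hl] := ca _ e20; exists l => _.
- exists F, (e / 2); split => //; split => // a hA ca x hin hout.
have hlt : forall j, o_norm (ops j) (x j) < e / 2.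
  move=> j; case: (pselect (List.In j F)) => [hj|hj]; first exact: hin.
  rewrite hout // ba_normN ltNge; apply/negP => h; apply: hj.
  exact: (hF a hA ca j h).
rewrite /c0_norm.
case: (pselect (exists j : I, True)) => [[j0 _]|nI].
  apply: le_lt_trans (_ : _ <= e / 2) _; last by rewrite ltr_pdivrMr // ltr_pMr // ltr1n.
  apply: ge_sup; first by exists (o_norm (ops j0) (x j0)), j0.
  by move=> r [j ->]; apply: ltW.
rewrite (_ : [set r | exists j, r = o_norm (ops j) (x j)]%classic = set0) ?sup0 //.
by rewrite predeqE => r; split => // [[j _]]; apply: nI; exists j.
Qed.

End Spec.

Section Lp.
Variables (R : realType) (I : Type) (U : I -> banach_algebra R).
Local Notation D := (dprod U).
Local Notation ops i := (ba_ops (U i)).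
Variables (p : R) (hp : 1 <= p).

Let p0 : 0 < p. Proof. exact: lt_le_trans ltr01 hp. Qed.
Let pinv0 : 0 < p^-1. Proof. by rewrite invr_gt0. Qed.
Let pw0 : powR 0 p = 0. Proof. by rewrite powR0 // gt_eqF. Qed.
Let powK (x : R) : 0 <= x -> powR (powR x p) p^-1 = x.
Proof. by move=> x0; rewrite -powRrM mulfV ?gt_eqF // powRr1. Qed.
Let powK' (x : R) : 0 <= x -> powR (powR x p^-1) p = x.
Proof. by move=> x0; rewrite -powRrM mulVf ?gt_eqF // powRr1. Qed.

Let E (x : D) := fin_psums (ds_pow p x).

Let E0 (x : D) : E x 0.
Proof. by exists [::]; split; [constructor | rewrite big_nil]. Qed.

Let pow_iota_ne i (b : U i) j : j <> i -> ds_pow p (iota b) j = 0.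
Proof. by move=> ne; rewrite /ds_pow iota_ne ?ba_norm0 // => e; apply: ne. Qed.

Let iota_ub i (b : U i) : ubound (E (iota b)) (ds_pow p (iota b) i).
Proof.
move=> r [l [nd ->]]; apply: sum_single_le => //; last exact: powR_ge0.
exact: pow_iota_ne.
Qed.

Lemma lp_iota_in i (b : U i) : lp_set U p (iota b).
Proof. by exists (ds_pow p (iota b) i); apply: iota_ub. Qed.

Let sup_ge0 (x : D) : has_ubound (E x) -> 0 <= sup (E x).
Proof. by move=> h; apply: sup_upper_bound; [split => //; exists 0; apply: E0 | apply: E0]. Qed.

Lemma lp_iota_norm i (b : U i) : lp_norm U p (iota b) <= o_norm (ops i) b.
Proof.
rewrite /lp_norm -(powK _ (ba_norm_ge0 _ _ b)).
apply: ge0_ler_powR; first exact: ltW.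
- by rewrite nnegrE; apply: sup_ge0; apply: lp_iota_in.
- by rewrite nnegrE powR_ge0.
apply: ge_sup; first by exists 0; apply: E0.
by have := iota_ub i b; rewrite /ds_pow iota_id.
Qed.

Lemma lp_iota_ge0 i (b : U i) : 0 <= lp_norm U p (iota b).
Proof. exact: powR_ge0. Qed.

Lemma lp_tail (A : seq D) (e : R) : 0 < e -> exists (F : seq I) (d : R),
  List.NoDup F /\ 0 < d /\
  forall a, List.In a A -> lp_set U p a -> forall x : D,
    (forall j, List.In j F -> o_norm (ops j) (x j) < d) ->
    (forall j, ~ List.In j F -> x j = o_opp (ops j) (a j)) -> lp_norm U p x < e.
Proof.
move=> e0.
have ep0 : 0 < powR e p by rewrite powR_gt0.
pose c := powR e p / 2.
have c0 : 0 < c by rewrite divr_gt0.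
pose eta := c / 2.
have eta0 : 0 < eta by rewrite divr_gt0.
have [|| F [nd hF]] := @cover I D A (fun a F => lp_set U p a ->
   forall G, List.NoDup G -> (forall j, List.In j G -> ~ List.In j F) ->
   \sum_(j <- G) ds_pow p a j < eta).
- move=> a F F' sub h la G ndG dis; apply: h => // j hj hjF.
  exact: (dis j hj (sub j hjF)).
- move=> a _; case: (pselect (lp_set U p a)) => [la|nla]; last by exists [::].
  have hs : has_sup (E a) by split => //; exists 0; apply: E0.
  have [r [l [ndl ->]] hr] := sup_adherent eta0 hs.
  exists l => _ G ndG dis.
  have : \sum_(j <- l ++ G) ds_pow p a j <= sup (E a).
    apply: sup_upper_bound => //; exists (l ++ G); split => //.
    by apply: List.NoDup_app => // j hj hjG; apply: (dis j hjG).
  rewrite big_cat /= => h.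
  by apply: (le_lt_trans (_ : _ <= sup (E a) - \sum_(j <- l) ds_pow p a j)); lra.
pose n := size F.
pose dp := c / 2 / (n%:R + 1).
have n1 : 0 < n%:R + 1 :> R by rewrite ltr_wpDl.
have dp0 : 0 < dp by rewrite /dp !divr_gt0.
pose d := powR dp p^-1.
- exists F, d; split => //; split; first by rewrite powR_gt0.
  move=> a hA la x hin hout.
  have bound : forall G, List.NoDup G -> \sum_(j <- G) ds_pow p x j <= c.
    move=> G ndG.
    rewrite (bigID (fun j => `[< List.In j F >])) /=.
    have h1 : \sum_(j <- G | `[< List.In j F >]) ds_pow p x j <= n%:R * dp.
      rewrite -big_filter; apply: (le_trans (@sum_le_const _ _ _ dp _ _)).
      + move=> j /In_filter [/asboolP hj _]; rewrite /ds_pow -(powK' _ (ltW dp0)).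
        apply: ge0_ler_powR; first exact: ltW.
        * by rewrite nnegrE ba_norm_ge0.
        * by rewrite nnegrE powR_ge0.
        exact: ltW (hin j hj).
      apply: ler_wpM2r; first exact: ltW.
      by rewrite ler_nat; apply: size_filter_In => // j /asboolP.
    have h2 : \sum_(j <- G | ~~ `[< List.In j F >]) ds_pow p x j < eta.
      rewrite -big_filter.
      rewrite (@eq_sum_In _ _ _ (ds_pow p a)); last first.
        move=> j /In_filter [/asboolP hj _].
        by rewrite /ds_pow hout // ba_normN.
      apply: hF => //; first exact: NoDup_filter'.
      by move=> j /In_filter [/asboolP hj _].
    apply: (le_trans _ (@half_ineq _ c n c0)); rewrite addrC; apply: lerD => //.
    exact: ltW.
  have hs : has_sup (E x) by split; [exists 0; apply: E0 | exists c => r [G [ndG ->]]; apply: bound].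
  have supc : sup (E x) <= c by apply: ge_sup; [exists 0; apply: E0 | move=> r [G [ndG ->]]; apply: bound].
  rewrite /lp_norm -(powK _ (ltW e0)).
  apply: gt0_ltr_powR => //.
  + by rewrite nnegrE; apply: sup_ge0; case: hs.
  + by rewrite nnegrE powR_ge0.
  by apply: le_lt_trans supc _; rewrite /c ltr_pdivrMr // ltr_pMr // ltr1n.
Qed.

End Lp.

Theorem proposition3p6 (R : realType) (I : Type) (U : I -> banach_algebra R) :
  (forall i, sym_pseudo_amenable (ba_ops (U i)) (fun _ => True)) ->
  (forall p : R, 1 <= p ->
     sym_pseudo_amenable (ds_ops U (lp_norm U p)) (lp_set U p)) /\
  sym_pseudo_amenable (ds_ops U (c0_norm U)) (c0_set U).
Proof.
move=> Hi; split.
  move=> p hp; apply: ds_spa => //.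
  - exact: lp_iota_in.
  - exact: lp_iota_norm.
  - exact: lp_iota_ge0.
  - exact: lp_tail.
apply: ds_spa => //.
- exact: c0_iota_in.
- exact: c0_iota_norm.
- exact: c0_iota_ge0.
- exact: c0_tail.
Qed.
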